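(* Fix $m>1$. For $b\in[0,1/\sqrt{24}]$ set $c=c(b)=\sqrt{1+b^2}$, $d=d(b)=\big(2(2b-c)\big)^{-1}$ and $$I(b)=\int_{-1}^{1}\frac{(2+s)-2(bs+c)^2}{(bs+c)^{m+4}}\,(dbs+dc+1)^{m-2}\,(2+s)\,ds .$$ Then $I(0)=\left(\tfrac12\right)^{m-2}\cdot\tfrac23>0$, $I(1/\sqrt{24})<0$, and there exists $b\in(0,1/\sqrt{24})$ with $I(b)=0$.
   Context: For $b\in[0,1/\sqrt{24}]$ one has $d<0$, $bs+c>0$ and $dbs+dc+1\ge 0$ for $s\in[-1,1]$ (with equality only at $b=1/\sqrt{24}$, $s=1$), so the integrand is well defined and integrable. (In the paper, a zero of $I$ yields a smooth $U(2)$-invariant conformally Kähler quasi-Einstein metric on $\mathbb{C}P^2\sharp\overline{\mathbb{C}P}^2$ with parameter $m$.) *)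

(* Defs.v *)
From Stdlib Require Import Reals Lra.
Open Scope R_scope.

Definition cb (b : R) : R := sqrt (1 + b ^ 2).
Definition db (b : R) : R := / (2 * (2 * b - cb b)).

(* Integrand of I(b) with real parameter m; real powers via Rpower
   (bases are positive on the relevant range s in [-1,1)). *)
Definition integrand (m b s : R) : R :=
  ((2 + s) - 2 * (b * s + cb b) ^ 2) / Rpower (b * s + cb b) (m + 4)
  * Rpower (db b * b * s + db b * cb b + 1) (m - 2) * (2 + s).

(* (Possibly improper at the right endpoint) Riemann integral:
   f is Riemann integrable on [a,t] for every t in [a,u), and
   int_a^t f -> L as t -> u^-.  For integrands continuous on [a,u]
   this coincides with the ordinary integral. *)
Definition improper_int_eq (f : R -> R) (a u L : R) : Prop :=
  (forall t, a <= t < u -> exists _ : Riemann_integrable f a t, True) /\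
  (forall eps, 0 < eps -> exists delta, 0 < delta /\
     forall t (pr : Riemann_integrable f a t),
       a <= t < u -> u - delta < t -> Rabs (RiemannInt pr - L) < eps).

Definition I_eq (m b L : R) : Prop :=
  improper_int_eq (integrand m b) (-1) 1 L.

(* Main.v *)
Require Import Defs.
From Stdlib Require Import Reals Lra Psatz.
From Coquelicot Require Import Coquelicot.
Open Scope R_scope.

Definition b0 := / sqrt 24.

Lemma b0_facts : 0 < b0 /\ b0 ^ 2 = / 24 /\ 1/5 < b0 < 21/100.
Proof.
  assert (H24 : 0 < sqrt 24) by (apply sqrt_lt_R0; lra).
  assert (Hs : sqrt 24 * sqrt 24 = 24) by (apply sqrt_sqrt; lra).
  assert (Hb : 0 < b0) by (unfold b0; apply Rinv_0_lt_compat; lra).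
  assert (Hsq : b0 ^ 2 = / 24).
  { unfold b0. rewrite pow_inv. simpl. rewrite Rmult_1_r, Hs. reflexivity. }
  repeat split; auto; nra.
Qed.

Lemma cb_facts b : 0 < cb b /\ cb b ^ 2 = 1 + b ^ 2 /\ 1 <= cb b.
Proof.
  unfold cb.
  assert (H1 : 0 < 1 + b ^ 2) by nra.
  assert (Hs : sqrt (1 + b^2) * sqrt (1 + b^2) = 1 + b^2) by (apply sqrt_sqrt; lra).
  assert (Hp : 0 < sqrt (1 + b^2)) by (apply sqrt_lt_R0; lra).
  set (q := sqrt (1 + b^2)) in *. split; [lra|split; [rewrite <- Hs; ring| nra]].
Qed.

Definition cl (a b x : R) := (a + b + Rabs (x - a) - Rabs (x - b)) / 2.

Lemma cl_id a b x : a <= x <= b -> cl a b x = x.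
Proof. intros. unfold cl, Rabs; repeat destruct Rcase_abs; lra. Qed.
Lemma cl_range a b x : a <= b -> a <= cl a b x <= b.
Proof. intros. unfold cl, Rabs; repeat destruct Rcase_abs; lra. Qed.
Lemma cl_lip a b x y : a <= b -> Rabs (cl a b x - cl a b y) <= Rabs (x - y).
Proof. intros. unfold cl, Rabs; repeat destruct Rcase_abs; lra. Qed.
Lemma cl_top a b x : a <= b -> cl a b x = b -> b <= x \/ a = b.
Proof. intros. unfold cl, Rabs in *; repeat destruct Rcase_abs; lra. Qed.

Lemma cont_cl a b x : continuity_pt (cl a b) x.
Proof.
  unfold cl. unfold Rdiv.
  apply continuity_pt_mult; [|apply continuity_pt_const; intros ? ?; reflexivity].
  apply continuity_pt_minus.
  - apply continuity_pt_plus. apply continuity_pt_const; intros ? ?; reflexivity.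
    apply (continuity_pt_comp (fun x => x - a) Rabs).
    apply continuity_pt_minus. apply continuity_pt_id. apply continuity_pt_const; intros ? ?; reflexivity.
    apply Rcontinuity_abs.
  - apply (continuity_pt_comp (fun x => x - b) Rabs).
    apply continuity_pt_minus. apply continuity_pt_id. apply continuity_pt_const; intros ? ?; reflexivity.
    apply Rcontinuity_abs.
Qed.

Lemma cont_cb x : continuity_pt cb x.
Proof.
  unfold cb. apply (continuity_pt_comp (fun x => 1 + x ^ 2) sqrt).
  - apply continuity_pt_plus. apply continuity_pt_const; intros ? ?; reflexivity.
    apply derivable_continuous_pt. apply derivable_pt_pow.
  - apply continuity_pt_sqrt. nra.
Qed.

Lemma twob_c b : 0 <= b <= b0 -> 0 < cb b - 2 * b.
Proof.
  intros Hb. destruct b0_facts as (h1 & h2 & h3). destruct (cb_facts b) as (c1 & c2 & c3).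
  nra.
Qed.

Lemma cont_db x : 0 <= x <= b0 -> continuity_pt db x.
Proof.
  intros Hx. unfold db.
  apply continuity_pt_inv.
  - apply continuity_pt_mult. apply continuity_pt_const; intros ? ?; reflexivity.
    apply continuity_pt_minus. apply continuity_pt_mult. apply continuity_pt_const; intros ? ?; reflexivity.
    apply continuity_pt_id. apply cont_cb.
  - pose proof (twob_c x Hx). nra.
Qed.

Lemma cont_pow y x : 0 < x -> continuity_pt (fun x => Rpower x y) x.
Proof.
  intros Hx. apply derivable_continuous_pt.
  exact (exist _ _ (derivable_pt_lim_power x y Hx)).
Qed.

Definition dval b s := db b * b * s + db b * cb b + 1.
Definition G m s c := integrand m (cl 0 b0 c) (cl (-1) 1 s).
Definition Dv s c := dval (cl 0 b0 c) (cl (-1) 1 s).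

Lemma c2_pow f n x y : continuity_2d_pt f x y -> continuity_2d_pt (fun u v => f u v ^ n) x y.
Proof.
  intros H. induction n as [|n IH]; simpl.
  - apply continuity_2d_pt_const.
  - apply (continuity_2d_pt_mult f (fun u v => f u v ^ n)); auto.
Qed.

Lemma c2_div f g x y : continuity_2d_pt f x y -> continuity_2d_pt g x y -> g x y <> 0 ->
  continuity_2d_pt (fun u v => f u v / g u v) x y.
Proof.
  intros. unfold Rdiv. apply (continuity_2d_pt_mult f (fun u v => / g u v)); auto.
  apply continuity_2d_pt_inv; auto.
Qed.

Ltac c2d := repeat (cbv beta; match goal with
 | |- continuity_2d_pt (fun _ _ => ?c) _ _ => apply continuity_2d_pt_const
 | |- continuity_2d_pt (fun u _ => u) _ _ => apply continuity_2d_pt_id1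
 | |- continuity_2d_pt (fun _ v => v) _ _ => apply continuity_2d_pt_id2
 | |- continuity_2d_pt (fun u v => @?A u v * @?B u v) _ _ => apply (continuity_2d_pt_mult A B)
 | |- continuity_2d_pt (fun u v => @?A u v + @?B u v) _ _ => apply (continuity_2d_pt_plus A B)
 | |- continuity_2d_pt (fun u v => @?A u v - @?B u v) _ _ => apply (continuity_2d_pt_minus A B)
 | |- continuity_2d_pt (fun u v => @?A u v / @?B u v) _ _ => apply (c2_div A B)
 | |- continuity_2d_pt (fun u v => - @?A u v) _ _ => apply (continuity_2d_pt_opp A)
 | |- continuity_2d_pt (fun u v => / @?A u v) _ _ => apply (continuity_2d_pt_inv A)
 | |- continuity_2d_pt (fun u v => @?A u v ^ ?n) _ _ => apply (c2_pow A n)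
 | |- continuity_2d_pt (fun u v => Rpower (@?A u v) ?y) _ _ => apply (continuity_1d_2d_pt_comp (fun x => Rpower x y) A)
 | |- continuity_2d_pt (fun u v => ?f (@?A u v)) _ _ => apply (continuity_1d_2d_pt_comp f A)
 end).

Lemma U_pos b s : 0 <= b <= b0 -> -1 <= s <= 1 -> 0 < b * s + cb b.
Proof. intros. destruct b0_facts as (h1 & h2 & h3). destruct (cb_facts b) as (c1 & c2 & c3). nra. Qed.

Lemma U_pos' c s : 0 < cl 0 b0 c * cl (-1) 1 s + cb (cl 0 b0 c).
Proof. apply U_pos; apply cl_range; destruct b0_facts; lra. Qed.

Lemma cont_G_pos m s c : 0 < Dv s c -> continuity_2d_pt (G m) s c.
Proof.
  intros HD. unfold G, integrand. c2d.
  all: try apply cont_cl.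
  all: try apply cont_cb.
  all: try (apply cont_db; apply cl_range; destruct b0_facts; lra).
  - apply cont_pow. apply U_pos'.
  - unfold Rpower. apply Rgt_not_eq, exp_pos.
  - apply cont_pow. exact HD.
Qed.

Lemma cont_Dv s c : continuity_2d_pt Dv s c.
Proof.
  unfold Dv, dval. c2d.
  all: try apply cont_cl.
  all: try apply cont_cb.
  all: try (apply cont_db; apply cl_range; destruct b0_facts; lra).
Qed.

Lemma dval_eq b s : 0 <= b <= b0 ->
  dval b s = (cb b - 4 * b - b * s) / (2 * (cb b - 2 * b)).
Proof.
  intros Hb. pose proof (twob_c b Hb). unfold dval, db. field. lra.
Qed.

Lemma N_ident b s : b * ((2 + s) - 2 * (b * s + cb b) ^ 2) =
  (cb b - 2*b) * (cb b - 3*b) * (cb b - 5*b) + (cb b - 4*b - b*s) * (8*b*cb b - 16*b^2 - 1)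
  - 2 * b * (cb b - 4*b - b*s)^2.
Proof.
  destruct (cb_facts b) as (c1 & c2 & c3).
  generalize dependent (cb b). intros c c1 c2 c3.
  transitivity ((c - 2*b) * (c - 3*b) * (c - 5*b) + (c - 4*b - b*s) * (8*b*c - 16*b^2 - 1)
  - 2 * b * (c - 4*b - b*s)^2 + (2*b - c) * (c^2 - 1 - b^2)); [ring|].
  rewrite c2. ring.
Qed.

Lemma c5b b : 0 <= b <= b0 -> 0 <= cb b - 5 * b.
Proof.
  intros Hb. destruct b0_facts as (h1 & h2 & h3). destruct (cb_facts b) as (c1 & c2 & c3).
  nra.
Qed.

Lemma N_bound b s : 3/20 <= b <= b0 -> 0 <= s <= 1 ->
  Rabs ((2 + s) - 2 * (b * s + cb b) ^ 2) <= 20 * (cb b - 4 * b - b * s).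
Proof.
  intros Hb Hs. destruct b0_facts as (h1 & h2 & h3).
  pose proof (c5b b ltac:(lra)) as H5.
  pose proof (N_ident b s) as HI.
  destruct (cb_facts b) as (c1 & c2 & c3).
  set (c := cb b) in *. set (N := (2 + s) - 2 * (b * s + c) ^ 2) in *.
  set (P := c - 4 * b - b * s) in *.
  assert (Hb2 : b ^ 2 <= / 24) by nra.
  assert (Hc : c <= 103/100) by nra.
  assert (HP : c - 5 * b <= P) by (unfold P; nra).
  assert (HP2 : P <= 1/2) by (unfold P; nra).
  assert (HX1 : 0 <= (c - 2*b) * (c - 3*b)) by nra.
  assert (HX2 : (c - 2*b) * (c - 3*b) <= 1) by nra.
  assert (HY1 : -1 <= 8*b*c - 16*b^2 - 1) by nra.
  assert (HY2 : 8*b*c - 16*b^2 - 1 <= 1) by nra.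
  assert (HZ : 0 <= 2 * b * P ^ 2 <= P) by (split; nra).
  set (X := (c - 2*b) * (c - 3*b)) in *. set (Y := 8*b*c - 16*b^2 - 1) in *.
  assert (HA : X * (c - 5 * b) <= P) by nra.
  assert (HA' : 0 <= X * (c - 5 * b)) by nra.
  assert (HB : Rabs (P * Y) <= P).
  { rewrite Rabs_mult. rewrite Rabs_pos_eq by lra. 
    assert (Rabs Y <= 1) by (apply Rabs_le; lra). nra. }
  assert (Hbn : Rabs (b * N) <= 3 * P).
  { rewrite HI. replace (X * (c - 5 * b) + P * Y - 2 * b * P ^ 2) with (X * (c - 5 * b) + P * Y - 2 * b * P ^ 2) by reflexivity.
    apply Rabs_le. apply Rabs_le_between in HB. unfold X in *. nra. }
  rewrite Rabs_mult, (Rabs_pos_eq b) in Hbn by lra.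
  assert (0 <= Rabs N) by apply Rabs_pos.
  nra.
Qed.

Lemma Rpower_pos x y : 0 < Rpower x y.
Proof. unfold Rpower. apply exp_pos. Qed.

Lemma int_bound m b s : 1 < m -> 3/20 <= b <= b0 -> 0 <= s <= 1 -> 0 < dval b s ->
  Rabs (integrand m b s) <= 1000 * Rpower (dval b s) (m - 1).
Proof.
  intros hm Hb Hs HD. destruct b0_facts as (h1 & h2 & h3).
  pose proof (N_bound b s Hb Hs) as HN.
  pose proof (dval_eq b s ltac:(lra)) as HDe.
  pose proof (twob_c b ltac:(lra)) as Htc.
  destruct (cb_facts b) as (c1 & c2 & c3).
  assert (HU : 1 <= b * s + cb b) by nra.
  assert (HR1 : 1 <= Rpower (b * s + cb b) (m + 4)).
  { rewrite <- (Rpower_O (b * s + cb b)) by lra. apply Rle_Rpower; lra. }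
  assert (HR2 : 0 < Rpower (dval b s) (m - 2)) by apply Rpower_pos.
  assert (HRm : Rpower (dval b s) (m - 1) = Rpower (dval b s) (m - 2) * dval b s).
  { replace (m - 1) with ((m - 2) + 1) by ring. rewrite Rpower_plus, Rpower_1; auto. }
  rewrite HRm.
  unfold integrand. fold (dval b s).
  set (D := dval b s) in *. set (R1 := Rpower (b * s + cb b) (m + 4)) in *.
  set (R2 := Rpower D (m - 2)) in *.
  set (N := 2 + s - 2 * (b * s + cb b) ^ 2) in *.
  assert (HQ : cb b - 4 * b - b * s = 2 * (cb b - 2 * b) * D).
  { rewrite HDe. field. lra. }
  assert (HQ3 : 2 * (cb b - 2 * b) <= 3) by nra.
  assert (HN2 : Rabs N <= 60 * D) by nra.
  unfold Rdiv. rewrite !Rabs_mult, Rabs_inv, (Rabs_pos_eq R1), (Rabs_pos_eq R2), (Rabs_pos_eq (2 + s)) by lra.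
  assert (HiR : 0 < / R1 <= 1).
  { split. apply Rinv_0_lt_compat; lra. rewrite <- Rinv_1. apply Rinv_le_contravar; lra. }
  assert (0 <= Rabs N) by apply Rabs_pos.
  assert (Rabs N * / R1 <= 60 * D) by nra.
  assert (0 <= Rabs N * / R1) by nra.
  set (W := Rabs N * / R1) in *.
  assert (W * R2 <= 60 * D * R2) by (apply Rmult_le_compat_r; lra).
  assert (0 <= W * R2) by nra.
  assert (W * R2 * (2 + s) <= 60 * D * R2 * 3) by (apply Rmult_le_compat; lra).
  nra.
Qed.

Lemma cb_b0 : cb b0 = 5 * b0.
Proof.
  destruct b0_facts as (h1 & h2 & h3). unfold cb.
  replace (1 + b0 ^ 2) with ((5 * b0) * (5 * b0)) by nra.
  apply sqrt_square. lra.
Qed.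

Lemma small_pow m : 1 < m -> forall eps, 0 < eps -> exists eta, 0 < eta /\
  forall D, 0 < D < eta -> 1000 * Rpower D (m - 1) < eps.
Proof.
  intros hm eps He. exists (exp (ln (eps / 1000) / (m - 1))). split. apply exp_pos.
  intros D [HD1 HD2].
  assert (H1 : ln D < ln (eps / 1000) / (m - 1)).
  { rewrite <- (ln_exp (ln (eps / 1000) / (m - 1))). apply ln_increasing; lra. }
  assert (H2 : (m - 1) * ln D < ln (eps / 1000)).
  { apply (Rmult_lt_compat_l (m - 1)) in H1; [|lra].
    replace ((m - 1) * (ln (eps / 1000) / (m - 1))) with (ln (eps / 1000)) in H1 by (field; lra). exact H1. }
  unfold Rpower. apply exp_increasing in H2. rewrite exp_ln in H2 by lra. lra.
Qed.

Lemma zero_case m b s : 0 <= b <= b0 -> -1 <= s <= 1 -> dval b s <= 0 ->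
  b = b0 /\ s = 1 /\ integrand m b s = 0.
Proof.
  intros Hb Hs HD. destruct b0_facts as (h1 & h2 & h3).
  pose proof (dval_eq b s Hb) as HDe.
  pose proof (twob_c b Hb) as Htc.
  pose proof (c5b b Hb) as H5.
  pose proof (N_ident b s) as HI.
  destruct (cb_facts b) as (c1 & c2 & c3).
  assert (HP : cb b - 4 * b - b * s <= 0).
  { assert (E : cb b - 4 * b - b * s = 2 * (cb b - 2 * b) * dval b s) by (rewrite HDe; field; lra).
    rewrite E. nra. }
  assert (Hc5 : cb b = 5 * b) by nra.
  assert (Hbp : 0 < b) by lra.
  assert (Hs1 : s = 1) by nra.
  assert (Hbb : b = b0) by nra.
  split; [exact Hbb|split; [exact Hs1|]].
  assert (HN : 2 + s - 2 * (b * s + cb b) ^ 2 = 0).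
  { subst s. apply (Rmult_eq_reg_l b); [|lra]. rewrite Rmult_0_r, HI, Hc5. ring. }
  unfold integrand. rewrite HN. unfold Rdiv. ring.
Qed.

Lemma dval_b0 : dval b0 1 = 0.
Proof.
  destruct b0_facts as (h1 & h2 & h3).
  rewrite dval_eq by lra. rewrite cb_b0. unfold Rdiv. ring.
Qed.

Lemma int_b0_1 m : integrand m b0 1 = 0.
Proof.
  destruct b0_facts as (h1 & h2 & h3).
  destruct (zero_case m b0 1) as (_ & _ & H); try lra. rewrite dval_b0; lra.
Qed.

Lemma key m : 1 < m -> forall eps, 0 < eps -> exists delta, 0 < delta /\
  forall b s, 0 <= b <= b0 -> -1 <= s <= 1 -> Rabs (b - b0) < delta -> Rabs (s - 1) < delta ->
  Rabs (integrand m b s) < eps.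
Proof.
  intros hm eps He. destruct b0_facts as (h1 & h2 & h3).
  destruct (small_pow m hm eps He) as (eta & Heta & Hp).
  destruct (cont_Dv 1 b0 (mkposreal eta Heta)) as (d1 & Hd1).
  exists (Rmin d1 (1/20)). split. { apply Rmin_pos. apply cond_pos. lra. }
  intros b s Hb Hs Hbd Hsd.
  assert (Hbd1 : Rabs (b - b0) < d1) by (eapply Rlt_le_trans; [exact Hbd| apply Rmin_l]).
  assert (Hsd1 : Rabs (s - 1) < d1) by (eapply Rlt_le_trans; [exact Hsd| apply Rmin_l]).
  assert (Hbd2 : Rabs (b - b0) < 1/20) by (eapply Rlt_le_trans; [exact Hbd| apply Rmin_r]).
  assert (Hsd2 : Rabs (s - 1) < 1/20) by (eapply Rlt_le_trans; [exact Hsd| apply Rmin_r]).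
  specialize (Hd1 s b Hsd1 Hbd1). simpl in Hd1.
  unfold Dv in Hd1. rewrite (cl_id 0 b0 b), (cl_id (-1) 1 s) in Hd1 by lra.
  rewrite (cl_id 0 b0 b0), (cl_id (-1) 1 1), dval_b0 in Hd1 by lra.
  rewrite Rminus_0_r in Hd1.
  destruct (Rlt_le_dec 0 (dval b s)) as [Hpos|Hneg].
  - apply Rabs_lt_between in Hbd2. apply Rabs_lt_between in Hsd2.
    eapply Rle_lt_trans. apply int_bound; try lra; auto.
    apply Hp. split; auto. apply Rabs_lt_between in Hd1. lra.
  - destruct (zero_case m b s Hb Hs Hneg) as (_ & _ & Hz). rewrite Hz, Rabs_R0. lra.
Qed.

Lemma cont_G m s c : 1 < m -> continuity_2d_pt (G m) s c.
Proof.
  intros hm. destruct b0_facts as (h1 & h2 & h3).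
  assert (Hb : 0 <= cl 0 b0 c <= b0) by (apply cl_range; lra).
  assert (Hs : -1 <= cl (-1) 1 s <= 1) by (apply cl_range; lra).
  destruct (Rlt_le_dec 0 (Dv s c)) as [Hp|Hn].
  - apply cont_G_pos; auto.
  - unfold Dv in Hn. destruct (zero_case m _ _ Hb Hs Hn) as (Eb & Es & _).
    intros eps. destruct (key m hm eps (cond_pos eps)) as (d & Hd & Hk).
    exists (mkposreal d Hd). simpl. intros u v Hu Hv.
    unfold G. rewrite Eb, Es, int_b0_1, Rminus_0_r.
    apply Hk; try (apply cl_range; lra).
    + pose proof (cl_lip 0 b0 v c ltac:(lra)) as L. rewrite Eb in L. lra.
    + pose proof (cl_lip (-1) 1 u s ltac:(lra)) as L. rewrite Es in L. lra.
Qed.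

Lemma c2_cont1 f x y : continuity_2d_pt f x y -> continuity_pt (fun u => f u y) x.
Proof.
  intros H eps He. destruct (H (mkposreal eps He)) as (d & Hd). exists d. split. apply cond_pos.
  intros u [_ Hu]. simpl in *. unfold R_dist in *. apply Hd; auto.
  rewrite Rminus_eq_0, Rabs_R0. apply cond_pos.
Qed.

Lemma cpt_eps f x : continuity_pt f x -> forall eps, 0 < eps -> exists d, 0 < d /\
  forall u, Rabs (u - x) < d -> Rabs (f u - f x) < eps.
Proof.
  intros H eps He. destruct (H eps He) as (d & Hd & Hf). exists d. split; auto.
  intros u Hu. destruct (Req_dec x u) as [E|E].
  - subst. rewrite Rminus_eq_0, Rabs_R0. lra.
  - apply (Hf u). split; auto. split; auto. exact I.
Qed.

Lemma cont_Gs m c s : 1 < m -> continuous (fun s => G m s c) s.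
Proof. intros hm. apply continuity_pt_filterlim. apply c2_cont1. apply cont_G; auto. Qed.

Lemma ex_G m c a b : 1 < m -> ex_RInt (fun s => G m s c) a b.
Proof. intros hm. apply (ex_RInt_continuous (V := R_CompleteNormedModule)). intros. apply cont_Gs; auto. Qed.

Definition J m c := RInt (fun s => G m s c) (-1) 1.

Lemma cont_J m c : 1 < m -> continuity_pt (J m) c.
Proof.
  intros hm eps He.
  destruct (uniform_continuity_2d_1d (G m) (-1) 1 c (fun x _ => cont_G m x c hm) (mkposreal (eps/4) ltac:(lra))) as (d & Hd).
  exists d. split. apply cond_pos. intros v [_ Hv]. simpl in *. unfold R_dist in *.
  unfold J.
  assert (E : RInt (fun s => G m s v) (-1) 1 - RInt (fun s => G m s c) (-1) 1 =
              RInt (fun s => G m s v - G m s c) (-1) 1).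
  { symmetry. apply (RInt_minus (V := R_CompleteNormedModule)); apply ex_G; auto. }
  rewrite E.
  eapply Rle_lt_trans. apply abs_RInt_le_const with (M := eps / 4). lra.
  apply (ex_RInt_minus (V := R_CompleteNormedModule)); apply ex_G; auto.
  - intros t Ht. left. apply Rabs_lt_between in Hv. apply Hd; try lra.
    rewrite Rminus_eq_0, Rabs_R0. apply cond_pos.
  - lra.
Qed.

Lemma G_eq m b s : 0 <= b <= b0 -> -1 <= s <= 1 -> G m s b = integrand m b s.
Proof. intros. unfold G. rewrite !cl_id; auto; lra. Qed.

Lemma I_eq_J m b : 1 < m -> 0 <= b <= b0 -> I_eq m b (J m b).
Proof.
  intros hm Hb. destruct b0_facts as (h1 & h2 & h3).
  assert (Hex : forall t, -1 <= t < 1 -> ex_RInt (integrand m b) (-1) t).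
  { intros t Ht. apply (ex_RInt_ext (V := R_CompleteNormedModule) (fun s => G m s b)).
    - intros x Hx. rewrite Rmin_left, Rmax_right in Hx by lra. apply G_eq; lra.
    - apply ex_G; auto. }
  split.
  - intros t Ht. exists (ex_RInt_Reals_0 _ _ _ (Hex t Ht)). exact I.
  - intros eps He.
    set (F := fun z => RInt (fun s => G m s b) (-1) z).
    assert (HF : continuity_pt F 1).
    { apply continuity_pt_filterlim. apply (continuous_RInt_1 (V := R_CompleteNormedModule) (fun s => G m s b) (-1)).
      apply filter_forall. intros z. apply RInt_correct. apply ex_G; auto. }
    destruct (cpt_eps F 1 HF eps He) as (d & Hd & Hc).
    exists d. split; auto. intros t pr Ht Htd.
    rewrite <- RInt_Reals.
    assert (E : RInt (integrand m b) (-1) t = F t).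
    { unfold F. symmetry. apply (RInt_ext (V := R_CompleteNormedModule)).
      intros x Hx. destruct (Req_dec t (-1)) as [Et|Et].
      + subst t. rewrite Rmin_left, Rmax_left in Hx by lra. lra.
      + rewrite Rmin_left, Rmax_right in Hx by lra. apply G_eq; lra. }
    rewrite E. apply Hc. rewrite Rabs_left; lra.
Qed.

Lemma int_0 m s : integrand m 0 s = Rpower (1/2) (m - 2) * (s * (2 + s)).
Proof.
  assert (Hc : cb 0 = 1). { unfold cb. replace (1 + 0 ^ 2) with 1 by ring. apply sqrt_1. }
  assert (Hd : db 0 = - (1/2)). { unfold db. rewrite Hc. field. }
  unfold integrand. rewrite Hd, Hc.
  replace (0 * s + 1) with 1 by ring.
  replace (- (1/2) * 0 * s + - (1/2) * 1 + 1) with (1/2) by field.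
  unfold Rpower at 1. rewrite ln_1, Rmult_0_r, exp_0. field.
Qed.

Lemma J_0 m : 1 < m -> J m 0 = Rpower (1/2) (m - 2) * (2/3).
Proof.
  intros hm. destruct b0_facts as (h1 & h2 & h3). unfold J.
  rewrite (RInt_ext (V := R_CompleteNormedModule) _ (fun s => Rpower (1/2) (m - 2) * (s * (2 + s)))).
  2:{ intros x Hx. rewrite Rmin_left, Rmax_right in Hx by lra. rewrite G_eq by lra. apply int_0. }
  apply is_RInt_unique.
  set (K := Rpower (1/2) (m - 2)).
  replace (K * (2/3)) with (minus (K * (1 ^ 2 + 1 ^ 3 / 3)) (K * ((-1) ^ 2 + (-1) ^ 3 / 3))).
  2:{ unfold minus, plus, opp; simpl. field. }
  apply (is_RInt_derive (V := R_CompleteNormedModule) (fun s => K * (s ^ 2 + s ^ 3 / 3))).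
  - intros x _. auto_derive; auto. field.
  - intros x _. apply continuity_pt_filterlim.
    apply continuity_pt_mult. apply continuity_pt_const; intros ? ?; reflexivity.
    apply continuity_pt_mult. apply continuity_pt_id.
    apply continuity_pt_plus. apply continuity_pt_const; intros ? ?; reflexivity. apply continuity_pt_id.
Qed.

Lemma J_b0 m : 1 < m -> J m b0 < 0.
Proof.
  intros hm. destruct b0_facts as (h1 & h2 & h3). unfold J.
  replace 0 with (RInt (fun _ => 0) (-1) 1).
  2:{ rewrite RInt_const. unfold scal; simpl; unfold mult; simpl. ring. }
  apply RInt_lt. lra.
  - intros. apply continuous_const.
  - intros. apply cont_Gs; auto.
  - intros x Hx. rewrite G_eq by lra. unfold integrand. rewrite cb_b0.
    assert (HN : 2 + x - 2 * (b0 * x + 5 * b0) ^ 2 < 0).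
    { replace (2 * (b0 * x + 5 * b0) ^ 2) with (2 * b0 ^ 2 * (x + 5) ^ 2) by ring.
      rewrite h2. nra. }
    pose proof (Rpower_pos (b0 * x + 5 * b0) (m + 4)).
    pose proof (Rpower_pos (db b0 * b0 * x + db b0 * (5 * b0) + 1) (m - 2)).
    set (A := 2 + x - 2 * (b0 * x + 5 * b0) ^ 2) in *.
    set (R1 := Rpower (b0 * x + 5 * b0) (m + 4)) in *.
    set (R2 := Rpower (db b0 * b0 * x + db b0 * (5 * b0) + 1) (m - 2)) in *.
    assert (A / R1 < 0). { unfold Rdiv. assert (0 < / R1) by (apply Rinv_0_lt_compat; lra). nra. }
    assert (A / R1 * R2 < 0) by nra. nra.
Qed.

Theorem mainTheorem3 (m : R) (hm : 1 < m) :
  I_eq m 0 (Rpower (1/2) (m - 2) * (2/3)) /\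
  0 < Rpower (1/2) (m - 2) * (2/3) /\
  (exists L, I_eq m (/ sqrt 24) L /\ L < 0) /\
  (exists b, 0 < b < / sqrt 24 /\ I_eq m b 0).
Proof.
  destruct b0_facts as (h1 & h2 & h3).
  pose proof (Rpower_pos (1/2) (m - 2)) as HK.
  split; [|split; [|split]].
  - rewrite <- J_0 by auto. apply I_eq_J; auto; lra.
  - lra.
  - exists (J m b0). split. apply I_eq_J; auto; lra. apply J_b0; auto.
  - pose proof (J_0 m hm) as E0. pose proof (J_b0 m hm) as E1.
    destruct (IVT_cor (J m) 0 b0 (fun c => cont_J m c hm)) as (z & Hz & Hz0).
    + lra.
    + rewrite E0. nra.
    + exists z. fold b0.
      assert (z <> 0) by (intro; subst; lra).
      assert (z <> b0) by (intro; subst; lra).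
      split; [lra|]. rewrite <- Hz0. apply I_eq_J; auto; lra.
Qed.
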